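(* Let $N=(V,E,c)$ be a network with $c_{\min}=\inf_{x\in V}c(x)>0$, fix $o\in V$ and $\gamma\in\mathbb{R}$, and let $K(x)=c(x)\min\{1,\langle x\rangle^{-2}(\log\langle x\rangle)^\gamma\}$. Let $X=(X_n)_{n\geq0}$ be the random walk on $N$ started at $x\in V$, and let $\tau_\dagger$ be the killing time of the coupled walk on $(V,E,c,K)$, so that conditionally on $X$, $\mathbf{P}_x(\tau_\dagger>n\mid X)=\prod_{i=0}^{n-1}\Big(1-\frac{K(X_i)}{c(X_i)+K(X_i)}\Big)$. Let $r>0$ and let $\mathscr{S}_r$ be the event that $\liminf_{n\to\infty}\frac{d(o,X_n)}{n^{1/2}(\log n)^r}>0$. If $\gamma+1<2r$, then $\mathbf{P}_x(\tau_\dagger=\infty\mid X)>0$ almost surely on the event $\mathscr{S}_r$.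
   Context: A network $(V,E,c)$ has conductances $c:E\to(0,\infty)$; $c(u)$ is the total conductance of oriented edges emanating from $u$, $c(u,v)$ that of oriented edges from $u$ to $v$, and the random walk on $N$ has transitions $c(u,v)/c(u)$. $d$ is the graph distance and $\langle x\rangle=2\vee d(o,x)$. The random walk on the network with killing $(V,E,c,K)$ has $P(u,v)=c(u,v)/(c(u)+K(u))$ and $P(u,\dagger)=K(u)/(c(u)+K(u))$; it is coupled with $X$ so that the two coincide until the killing time $\tau_\dagger$ (the first time the killed walk is at $\dagger$), with killing at each step from $X_i$ occurring independently given $X$ with probability $K(X_i)/(c(X_i)+K(X_i))$. *)

(* Defs.v *)
From Stdlib Require Import Reals ClassicalEpsilon.
From Coquelicot Require Import Coquelicot.
Open Scope R_scope.

Section Net.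
Context {V : Type}.

(* [cuv u v] = c(u,v), total conductance of oriented edges from u to v.
   u and v are adjacent in the underlying graph iff c(u,v) > 0. *)

Inductive walk_len (cuv : V -> V -> R) : nat -> V -> V -> Prop :=
| walk0 : forall u, walk_len cuv 0 u u
| walkS : forall n u w v, 0 < cuv u w -> walk_len cuv n w v ->
            walk_len cuv (S n) u v.

Definition connected (cuv : V -> V -> R) : Prop :=
  forall u v, exists n, walk_len cuv n u v.

(* graph distance: the least length of a path from u to v
   (well defined when the graph is connected). *)
Definition dist (cuv : V -> V -> R) (u v : V) : nat :=
  epsilon (inhabits 0%nat)
    (fun n => walk_len cuv n u v /\ forall m, walk_len cuv m u v -> (n <= m)%nat).

Definition bracket (cuv : V -> V -> R) (o x : V) : R :=
  Rmax 2 (INR (dist cuv o x)).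

Definition Kill (cuv : V -> V -> R) (c : V -> R) (o : V) (gamma : R) (x : V) : R :=
  c x * Rmin 1 (/ (bracket cuv o x ^ 2) * Rpower (ln (bracket cuv o x)) gamma).

Definition kill_prob cuv c o gamma (x : V) : R :=
  Kill cuv c o gamma x / (c x + Kill cuv c o gamma x).

Fixpoint surv_prod cuv c o gamma (X : nat -> V) (n : nat) : R :=
  match n with
  | O => 1
  | S k => surv_prod cuv c o gamma X k * (1 - kill_prob cuv c o gamma (X k))
  end.

Definition surv_inf cuv c o gamma (X : nat -> V) : Rbar :=
  Lim_seq (surv_prod cuv c o gamma X).

Definition S_event (cuv : V -> V -> R) (o : V) (r : R) (X : nat -> V) : Prop :=
  Rbar_lt (Finite 0)
    (LimInf_seq (fun n => INR (dist cuv o (X n)) /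
                          (sqrt (INR n) * Rpower (ln (INR n)) r))).

(* X is a possible trajectory of the random walk on the network started at x *)
Definition trajectory (cuv : V -> V -> R) (x : V) (X : nat -> V) : Prop :=
  X 0%nat = x /\ forall n, 0 < cuv (X n) (X (S n)).

End Net.

(* Main.v *)
Require Import Defs.
From Stdlib Require Import Reals Lra Lia Classical ClassicalEpsilon.
From Coquelicot Require Import Coquelicot.
Open Scope R_scope.

Lemma nat_big (A : R) : exists n : nat, A <= INR n.
Proof. destruct (INR_archimed 1 A) as [n Hn]; [lra|]. exists n; lra. Qed.

Lemma ln_le_m1 y : 0 < y -> ln y <= y - 1.
Proof. intros Hy. pose proof (exp_ineq1_le (ln y)). rewrite exp_ln in H; lra. Qed.

Lemma lnd a b : 0 < a -> a < b -> (b - a) / b <= ln b - ln a.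
Proof.
  intros Ha Hab.
  assert (H := ln_le_m1 (a / b)).
  assert (0 < a / b) by (apply Rdiv_lt_0_compat; lra).
  specialize (H H0). unfold Rdiv in H. rewrite ln_mult, ln_Rinv in H by (try apply Rinv_0_lt_compat; lra).
  replace ((b - a) / b) with (1 - a * / b) by (field; lra). lra.
Qed.

Lemma ln_ge1 n : 3 <= n -> 1 <= ln n.
Proof.
  intros H. rewrite <- (ln_exp 1). apply ln_le. apply exp_pos.
  pose proof exp_le_3. lra.
Qed.

Lemma ln_sqrt' n : 0 < n -> ln (sqrt n) = ln n / 2.
Proof.
  intros H. assert (0 < sqrt n) by (apply sqrt_lt_R0; lra).
  assert (ln (sqrt n * sqrt n) = ln n) by (rewrite sqrt_sqrt; lra).
  rewrite ln_mult in H1 by lra. lra.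
Qed.

Lemma pbound eps gam r n a : 0 < eps -> 0 < r -> 3 <= n -> 2 <= a ->
  eps * (sqrt n * Rpower (ln n) r) <= a -> a <= n * n ->
  - 4 * ln eps <= ln n ->
  / (a ^ 2) * Rpower (ln a) gam <=
  Rpower 4 (Rabs gam) / (eps * eps) / (n * Rpower (ln n) (2 * r - gam)).
Proof.
  intros He Hr Hn Ha Hlo Hhi Hl.
  set (L := ln n) in *.
  assert (HL : 1 <= L) by (apply ln_ge1; lra).
  assert (Hsq : 0 < sqrt n) by (apply sqrt_lt_R0; lra).
  assert (HRr : 1 <= Rpower L r).
  { unfold Rpower. rewrite <- exp_0. apply exp_le_3 || idtac.
    destruct (Rle_lt_or_eq_dec 0 (r * ln L)); [ | | rewrite <- e; lra].
    - apply Rmult_le_pos; [lra|]. rewrite <- ln_1. apply ln_le; lra.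
    - left. apply exp_increasing. lra. }
  assert (la_lo : L / 4 <= ln a).
  { assert (eps * sqrt n <= a).
    { apply Rle_trans with (2 := Hlo). apply Rmult_le_compat_l; [lra|].
      rewrite <- (Rmult_1_r (sqrt n)) at 1. apply Rmult_le_compat_l; lra. }
    assert (ln (eps * sqrt n) <= ln a) by (apply ln_le; [apply Rmult_lt_0_compat|]; lra).
    rewrite ln_mult, ln_sqrt' in H0 by lra. unfold L in *. lra. }
  assert (la_hi : ln a <= 2 * L).
  { assert (ln a <= ln (n * n)) by (apply ln_le; lra).
    rewrite ln_mult in H by lra. unfold L. lra. }
  assert (Hln4 : 0 < ln 4) by (rewrite <- ln_1; apply ln_increasing; lra).
  assert (Hln2 : ln 2 <= ln 4) by (apply ln_le; lra).
  assert (Hlla : Rabs (ln (ln a) - ln L) <= ln 4).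
  { assert (ln (L / 4) <= ln (ln a)) by (apply ln_le; lra).
    assert (ln (ln a) <= ln (2 * L)) by (apply ln_le; lra).
    unfold Rdiv in H. rewrite ln_mult, ln_Rinv in H by lra.
    rewrite ln_mult in H0 by lra.
    apply Rabs_le. lra. }
  assert (Hpow : Rpower (ln a) gam <= Rpower 4 (Rabs gam) * Rpower L gam).
  { unfold Rpower. rewrite <- exp_plus. apply exp_le_3 || idtac.
    destruct (Rle_lt_or_eq_dec (gam * ln (ln a)) (Rabs gam * ln 4 + gam * ln L)).
    - assert (gam * (ln (ln a) - ln L) <= Rabs gam * ln 4).
      { apply Rle_trans with (Rabs (gam * (ln (ln a) - ln L))). apply Rle_abs.
        rewrite Rabs_mult. apply Rmult_le_compat_l; [apply Rabs_pos|exact Hlla]. }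
      lra.
    - left; apply exp_increasing; lra.
    - rewrite e; lra. }
  set (m := eps * (sqrt n * Rpower L r)) in *.
  assert (Hm : 0 < m) by (unfold m; repeat apply Rmult_lt_0_compat; lra).
  assert (Hinv : / (a ^ 2) <= / (m * m)).
  { apply Rinv_le_contravar. nra. simpl. nra. }
  assert (Hm2 : m * m = eps * eps * n * (Rpower L (2 * r - gam) * Rpower L gam)).
  { unfold m. rewrite <- Rpower_plus. replace (2 * r - gam + gam) with (r + r) by ring.
    rewrite Rpower_plus. replace n with (sqrt n * sqrt n) at 3 by (apply sqrt_sqrt; lra). ring. }
  assert (HPg : 0 < Rpower L gam) by apply exp_pos.
  assert (HPq : 0 < Rpower L (2 * r - gam)) by apply exp_pos.
  assert (HP4 : 0 < Rpower 4 (Rabs gam)) by apply exp_pos.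
  apply Rle_trans with (/ (m * m) * (Rpower 4 (Rabs gam) * Rpower L gam)).
  { apply Rmult_le_compat; try lra. left; apply Rinv_0_lt_compat; simpl; nra. left; apply exp_pos. }
  rewrite Hm2. right. field. repeat split; lra.
Qed.

Lemma g_tele q k : 1 < q -> 3 <= k ->
  (q - 1) / (k * Rpower (ln k) q) <=
  Rpower (ln (k - 1)) (1 - q) - Rpower (ln k) (1 - q).
Proof.
  intros Hq Hk.
  assert (HL1 : 0 < ln (k - 1)).
  { rewrite <- ln_1. apply ln_increasing; lra. }
  assert (HL12 : ln (k - 1) < ln k) by (apply ln_increasing; lra).
  set (L1 := ln (k - 1)) in *. set (L2 := ln k) in *.
  assert (D1 : 1 / k <= L2 - L1).
  { pose proof (lnd (k-1) k ltac:(lra) ltac:(lra)). unfold L1, L2.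
    replace (1 / k) with ((k - (k - 1)) / k) by (field; lra). exact H. }
  assert (D2 : (L2 - L1) / L2 <= ln L2 - ln L1) by (apply lnd; lra).
  unfold Rpower.
  set (s := 1 - q).
  assert (E : exp (s * ln L1) = exp (s * ln L2) * exp (s * (ln L1 - ln L2))).
  { rewrite <- exp_plus. f_equal. ring. }
  assert (E2 := exp_ineq1_le (s * (ln L1 - ln L2))).
  assert (P := exp_pos (s * ln L2)).
  assert (X1 : exp (s * ln L2) * ((q - 1) * (ln L2 - ln L1)) <=
               exp (s * ln L1) - exp (s * ln L2)).
  { rewrite E. unfold s in *. nra. }
  assert (HL2 : 0 < L2) by lra.
  assert (X2 : (q - 1) / (k * exp (q * ln L2)) = exp (s * ln L2) * ((q-1) / (k * L2))).
  { replace (s * ln L2) with (ln L2 + - (q * ln L2)) by (unfold s; ring).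
    rewrite exp_plus, exp_ln by lra. rewrite exp_Ropp.
    field. repeat split; try lra. apply Rgt_not_eq, exp_pos. }
  rewrite X2.
  apply Rle_trans with (2 := X1).
  apply Rmult_le_compat_l; [lra|].
  assert (1 / k / L2 <= (L2 - L1) / L2).
  { unfold Rdiv. apply Rmult_le_compat_r. left; apply Rinv_0_lt_compat; lra. lra. }
  replace ((q - 1) / (k * L2)) with ((q-1) * (1 / k / L2)) by (field; lra).
  apply Rmult_le_compat_l; lra.
Qed.

Lemma g_small q eta : 1 < q -> 0 < eta ->
  exists T, 1 < T /\ forall t, T <= t -> Rpower (ln t) (1 - q) <= eta.
Proof.
  intros Hq He.
  set (y := exp (ln eta / (1 - q))).
  assert (Hy : 0 < y) by apply exp_pos.
  exists (exp y). split.
  { rewrite <- exp_0. apply exp_increasing. lra. }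
  intros t Ht.
  assert (Ht0 : 0 < t) by (pose proof (exp_pos y); lra).
  assert (y <= ln t) by (rewrite <- (ln_exp y); apply ln_le; [apply exp_pos|lra]).
  assert (ln y <= ln (ln t)) by (apply ln_le; lra).
  unfold Rpower.
  assert (Hy' : ln y = ln eta / (1 - q)) by (unfold y; apply ln_exp).
  assert ((1 - q) * ln (ln t) <= ln eta).
  { replace (ln eta) with ((1 - q) * ln y) by (rewrite Hy'; field; lra). nra. }
  destruct (Rle_lt_or_eq_dec _ _ H1).
  - left. rewrite <- (exp_ln eta) by lra. apply exp_increasing; lra.
  - rewrite e, exp_ln; lra.
Qed.

Lemma liminf_pos (u : nat -> R) : Rbar_lt 0 (LimInf_seq u) ->
  exists eps, 0 < eps /\ exists N, forall n, (N <= n)%nat -> eps < u n.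
Proof.
  destruct (ex_LimInf_seq u) as [l Hl]. rewrite (is_LimInf_seq_unique _ _ Hl).
  destruct l as [l| |]; simpl; intros H.
  - assert (Hp : 0 < l / 2) by lra.
    destruct (Hl (mkposreal _ Hp)) as [_ [N HN]]. exists (l / 2). split; [lra|].
    exists N. intros n Hn. specialize (HN n Hn). simpl in HN. lra.
  - destruct (Hl 1) as [N HN]. exists 1. split; [lra|]. exists N. exact HN.
  - contradiction.
Qed.

Lemma prod_lower (u p h : nat -> R) (B : R) (N : nat) :
  (forall n, u (S n) = u n * (1 - p n)) -> (forall n, 0 <= p n <= 1) ->
  0 <= u N -> 0 <= B ->
  (forall n, (N <= n)%nat -> p n <= B * (h n - h (S n))) ->
  forall k, u N * (1 - B * (h N - h (N + k)%nat)) <= u (N + k)%nat /\ u (N + k)%nat <= u N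
            /\ 0 <= u (N + k)%nat.
Proof.
  intros Hu Hp HuN HB Hph k. induction k as [|k IH].
  - rewrite Nat.add_0_r. split; [|lra]. right; ring.
  - destruct IH as [IH1 [IH2 IH3]].
    replace (N + S k)%nat with (S (N + k)) by lia. rewrite Hu.
    specialize (Hph (N + k)%nat ltac:(lia)). specialize (Hp (N + k)%nat).
    split; [|split]; nra.
Qed.

Lemma min_nat (P : nat -> Prop) : (exists n, P n) ->
  exists n, P n /\ forall m, P m -> (n <= m)%nat.
Proof.
  intros [n0 Hn0]. apply NNPP. intros Hno.
  assert (forall n, forall k, (k <= n)%nat -> ~ P k).
  { induction n as [|n IH]; intros k Hk HP.
    - apply Hno. exists k. split; [exact HP|]. intros m _. lia.
    - apply Hno. exists k. split; [exact HP|]. intros m Hm.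
      destruct (Compare_dec.le_lt_dec k m) as [|Hlt]; [lia|].
      exfalso. apply (IH m); [lia|exact Hm]. }
  exact (H n0 n0 (le_n _) Hn0).
Qed.

Lemma dist_spec {V : Type} (cuv : V -> V -> R) u v : connected cuv ->
  walk_len cuv (Defs.dist cuv u v) u v /\ forall m, walk_len cuv m u v -> (Defs.dist cuv u v <= m)%nat.
Proof.
  intros Hc. unfold Defs.dist. apply epsilon_spec. apply min_nat. apply Hc.
Qed.

Lemma walk_snoc {V : Type} (cuv : V -> V -> R) n u v w :
  walk_len cuv n u v -> 0 < cuv v w -> walk_len cuv (S n) u w.
Proof.
  induction 1; intros Hvw.
  - apply walkS with w; [exact Hvw| constructor].
  - apply walkS with w0; [exact H|]. apply IHwalk_len; exact Hvw.
Qed.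

Lemma dist_traj {V : Type} (cuv : V -> V -> R) o x X : connected cuv ->
  trajectory cuv x X -> forall n, (Defs.dist cuv o (X n) <= Defs.dist cuv o x + n)%nat.
Proof.
  intros Hc [H0 Hs] n.
  assert (W : walk_len cuv (Defs.dist cuv o x + n) o (X n)).
  { induction n.
    - rewrite Nat.add_0_r, H0. apply dist_spec, Hc.
    - replace (Defs.dist cuv o x + S n)%nat with (S (Defs.dist cuv o x + n)) by lia.
      apply walk_snoc with (X n); [exact IHn | apply Hs]. }
  apply (proj2 (dist_spec cuv o (X n) Hc)), W.
Qed.

Lemma kp_facts {V : Type} (cuv : V -> V -> R) c o gam y : 0 < c y ->
  0 <= kill_prob cuv c o gam y < 1 /\
  kill_prob cuv c o gam y <= / (bracket cuv o y ^ 2) * Rpower (ln (bracket cuv o y)) gam.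
Proof.
  intros Hc. unfold kill_prob, Kill.
  set (b := bracket cuv o y).
  assert (Hb : 2 <= b) by apply Rmax_l.
  set (t := / (b ^ 2) * Rpower (ln b) gam).
  assert (Ht : 0 < t).
  { unfold t. apply Rmult_lt_0_compat. apply Rinv_0_lt_compat. simpl; nra. apply exp_pos. }
  set (m := Rmin 1 t).
  assert (Hm0 : 0 <= m) by (unfold m; apply Rmin_glb; lra).
  assert (Hmt : m <= t) by apply Rmin_r.
  replace (c y * m / (c y + c y * m)) with (m / (1 + m)) by (field; nra).
  assert (m / (1 + m) <= m).
  { assert (/ (1 + m) <= 1) by (rewrite <- Rinv_1; apply Rinv_le_contravar; lra).
    unfold Rdiv. nra. }
  split; [split|].
  - apply Rmult_le_pos; [lra|]. left; apply Rinv_0_lt_compat; lra.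
  - apply (Rmult_lt_reg_r (1 + m)); [lra|]. unfold Rdiv. rewrite Rmult_assoc, Rinv_l by lra. lra.
  - lra.
Qed.

Theorem lemma3p5 (V : Type) (cuv : V -> V -> R) (c : V -> R)
  (hcuv_nonneg : forall u v, 0 <= cuv u v)
  (hcuv_sym : forall u v, cuv u v = cuv v u)
  (hc_ge : forall u v, cuv u v <= c u)
  (hconn : connected cuv)
  (hcmin : exists cmin, 0 < cmin /\ forall y, cmin <= c y)
  (o : V) (gamma r : R) (hr : 0 < r) (hgr : gamma + 1 < 2 * r)
  (x : V) (X : nat -> V) (hX : trajectory cuv x X) :
  S_event cuv o r X -> Rbar_lt (Finite 0) (surv_inf cuv c o gamma X).
Proof.
  intros HS.
  destruct hcmin as [cmin [Hcm Hcy]].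
  assert (Hc : forall y, 0 < c y) by (intros y; specialize (Hcy y); lra).
  set (u := surv_prod cuv c o gamma X).
  set (p := fun k => kill_prob cuv c o gamma (X k)).
  assert (Hu : forall n, u (S n) = u n * (1 - p n)) by reflexivity.
  assert (Hp : forall n, 0 <= p n < 1) by (intros n; apply kp_facts, Hc).
  assert (Hupos : forall n, 0 < u n).
  { induction n. unfold u; simpl; lra. rewrite Hu. specialize (Hp n). nra. }
  destruct (liminf_pos _ HS) as [eps [Heps [N0 HN0]]].
  set (q := 2 * r - gamma).
  assert (Hq : 1 < q) by (unfold q; lra).
  set (B := Rpower 4 (Rabs gamma) / (eps * eps) / (q - 1)).
  assert (HB : 0 < B).
  { unfold B. unfold Rdiv. repeat apply Rmult_lt_0_compat; try apply Rinv_0_lt_compat;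
    try apply exp_pos; nra. }
  destruct (g_small q (/ (2 * B)) Hq) as [T [HT1 HT]].
  { apply Rinv_0_lt_compat; lra. }
  set (D0 := Defs.dist cuv o x).
  destruct (nat_big (exp (- 4 * ln eps))) as [N2 HN2].
  destruct (nat_big (T + 1)) as [N3 HN3].
  set (N := Nat.max N0 (Nat.max 3 (Nat.max (D0 + 2) (Nat.max N2 N3)))).
  set (h := fun n : nat => Rpower (ln (INR n - 1)) (1 - q)).
  assert (Hph : forall n, (N <= n)%nat -> p n <= B * (h n - h (S n))).
  { intros n Hn.
    assert (Hn3 : 3 <= INR n) by (replace 3 with (INR 3) by (simpl; ring); apply le_INR; unfold N in Hn; lia).
    assert (HD : INR D0 + 2 <= INR n).
    { replace (INR D0 + 2) with (INR (D0 + 2)) by (rewrite plus_INR; simpl; ring).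
      apply le_INR. unfold N in Hn; lia. }
    assert (HnN2 : INR N2 <= INR n) by (apply le_INR; unfold N in Hn; lia).
    pose proof (proj2 (kp_facts cuv c o gamma (X n) (Hc (X n)))) as Hk.
    set (b := bracket cuv o (X n)) in Hk.
    set (d := Defs.dist cuv o (X n)).
    assert (Hdb : INR d <= b) by apply Rmax_r.
    assert (Hd : INR d <= INR D0 + INR n).
    { rewrite <- plus_INR. apply le_INR. apply dist_traj; assumption. }
    assert (Hsq : 0 < sqrt (INR n)) by (apply sqrt_lt_R0; lra).
    assert (HL : 1 <= ln (INR n)) by (apply ln_ge1; lra).
    assert (HR : 0 < Rpower (ln (INR n)) r) by apply exp_pos.
    assert (Hlo : eps * (sqrt (INR n) * Rpower (ln (INR n)) r) <= b).
    { specialize (HN0 n ltac:(unfold N in Hn; lia)). simpl in HN0.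
      fold d in HN0.
      assert (0 < sqrt (INR n) * Rpower (ln (INR n)) r) by (apply Rmult_lt_0_compat; lra).
      apply (Rmult_lt_compat_r (sqrt (INR n) * Rpower (ln (INR n)) r)) in HN0; [|lra].
      unfold Rdiv in HN0. rewrite Rmult_assoc, Rinv_l in HN0 by lra. lra. }
    assert (Hhi : b <= INR n * INR n).
    { pose proof (pos_INR D0). unfold b, bracket. apply Rmax_lub. nra. fold d. nra. }
    assert (Hln : - 4 * ln eps <= ln (INR n)).
    { rewrite <- (ln_exp (-4 * ln eps)). apply ln_le. apply exp_pos. lra. }
    pose proof (pbound eps gamma r (INR n) b Heps hr Hn3 (Rmax_l _ _) Hlo Hhi Hln) as Hpb.
    pose proof (g_tele q (INR n) Hq Hn3) as Hg.
    unfold h. rewrite S_INR. replace (INR n + 1 - 1) with (INR n) by ring.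
    fold q in Hpb.
    apply Rle_trans with (1 := Hk). apply Rle_trans with (1 := Hpb).
    assert (HRq : 0 < Rpower (ln (INR n)) q) by apply exp_pos.
    replace (Rpower 4 (Rabs gamma) / (eps * eps) / (INR n * Rpower (ln (INR n)) q))
      with (B * ((q - 1) / (INR n * Rpower (ln (INR n)) q))).
    2: { unfold B. field. repeat split; nra. }
    apply Rmult_le_compat_l; lra. }
  assert (HPL := prod_lower u p h B N Hu
                   (fun n => conj (proj1 (Hp n)) (Rlt_le _ _ (proj2 (Hp n))))
                   (Rlt_le _ _ (Hupos N)) (Rlt_le _ _ HB) Hph).
  assert (HhN : h N <= / (2 * B)).
  { apply HT. assert (INR N3 <= INR N) by (apply le_INR; unfold N; lia). lra. }
  assert (Hh0 : forall n, 0 <= h n) by (intros; left; apply exp_pos).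
  assert (Hlow : forall k, u N / 2 <= u (N + k)%nat).
  { intros k. destruct (HPL k) as [H1 _]. specialize (Hh0 (N + k)%nat).
    assert (B * h N <= 1 / 2).
    { apply Rmult_le_compat_l with (r := B) in HhN; [|lra].
      replace (B * / (2 * B)) with (1 / 2) in HhN by (field; lra). lra. }
    specialize (Hupos N).
    assert (0 <= u N * (B * h (N + k)%nat)) by (apply Rmult_le_pos; [lra| apply Rmult_le_pos; lra]).
    assert (0 <= u N * (1 / 2 - B * h N)) by (apply Rmult_le_pos; lra).
    nra. }
  unfold surv_inf. fold u.
  apply Rbar_lt_le_trans with (Finite (u N / 2)).
  { simpl. specialize (Hupos N). lra. }
  rewrite <- (Lim_seq_const (u N / 2)).
  apply Lim_seq_le_loc. exists N. intros n Hn.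
  replace n with (N + (n - N))%nat by lia. apply Hlow.
Qed.
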